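(* Let $p$ be a prime, $m\ge 1$ and $r$ integers with $r^p\equiv 1 \pmod m$, and let $G=\langle x, y\mid x^p=y^m=1,\ x^{-1}yx=y^r\rangle$ (so $G\cong C_p\ltimes C_m$, $|G|=pm$), where $p$ is the smallest prime divisor of $|G|$ and $\gcd(p(r-1), m)=1$. Let $N=\langle y\rangle$ and let $\varphi:G\to G/N$ be the canonical homomorphism. Let $T=g_1\cdot \ldots \cdot g_t$ be a sequence over $G$ such that $\varphi(T)=\varphi(g_1)\cdot\ldots\cdot\varphi(g_t)$ is a minimal product-one sequence over $G/N$. Then for any $u\in\pi(T)$ we have $\pi(T)\supseteq \{u^{r^{s_{1}}}, u^{r^{s_{2}}}, \ldots, u^{r^{s_{t}}}\}$ for some subset $\{s_1,\ldots, s_t\}\subseteq [0,p-1]$. Moreover, if $u\neq 1$, then $t\le p$ and $u^{r^{s_i}}\neq u^{r^{s_j}}$ for all $1\leq i<j\leq t$.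
   Context: A sequence over a group is a finite unordered list of elements with repetition allowed. For a sequence $S=g_1\cdot\ldots\cdot g_\ell$, $\pi(S)=\{g_{\tau(1)}\cdots g_{\tau(\ell)}:\tau \text{ a permutation of } [1,\ell]\}$. $S$ is product-one if $1\in\pi(S)$, and minimal product-one if it is product-one and has no proper nonempty product-one subsequence. For integers $a\le b$, $[a,b]=\{z\in\mathbb Z: a\le z\le b\}$. *)

(* Defs.v *)
From HB Require Import structures.
From mathcomp Require Import all_boot all_order all_algebra all_fingroup.
Set Implicit Arguments. Unset Strict Implicit. Unset Printing Implicit Defensive.
Import GRing.Theory.

(* Sequences over a finite group are modelled by [seq gT] (order irrelevant:
   every notion below is invariant under permutation). *)

Definition in_pi (gT : finGroupType) (s : seq gT) (u : gT) : Prop :=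
  exists2 t : seq gT, perm_eq t s & (\prod_(g <- t) g)%g = u.

Definition product_one (gT : finGroupType) (s : seq gT) : Prop :=
  in_pi s 1%g.

Definition min_product_one (gT : finGroupType) (s : seq gT) : Prop :=
  product_one s /\
  forall b : bitseq, (0 < size (mask b s) < size s)%N -> ~ product_one (mask b s).

Definition zexpg (gT : finGroupType) (x : gT) (z : int) : gT :=
  match z with
  | Posz n => (x ^+ n)%g
  | Negz n => ((x ^+ n.+1)^-1)%g
  end.

(* Main.v *)
Require Import Defs.
From HB Require Import structures.
From mathcomp Require Import all_boot all_order all_algebra all_fingroup.
From mathcomp Require Import all_solvable.
From mathcomp Require Import zify.
Import GRing.Theory.

Section Helpers.
Set Implicit Arguments. Unset Strict Implicit.

Lemma zexpgE (gT : finGroupType) (g : gT) (m : nat) (z : int) (k : nat) :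
  (0 < m)%N -> (g ^+ m = 1)%g -> (z == k %[mod m%:Z])%Z -> zexpg g z = (g ^+ k)%g.
Proof.
move=> m0 gm hz; case: z hz => [n|n] /= hz.
  have e : (n %% m = k %% m)%N.
    by move: hz; rewrite !modz_nat => /eqP [].
  by rewrite -(expg_mod _ gm) e (expg_mod _ gm).
move: hz; rewrite NegzE => hz.
have e : ((n.+1 + k) %% m = 0)%N.
  move: hz; rewrite eqz_mod_dvd dvdzE.
  have -> : `|(- (n.+1)%:Z - k%:Z)%R|%N = (n.+1 + k)%N by lia.
  by move=> /eqP.
have h1 : (g ^+ (n.+1 + k) = 1)%g by rewrite -(expg_mod _ gm) e.
by rewrite -[RHS](mulKg (g ^+ n.+1)%g) -expgD h1 mulg1.
Qed.

Lemma sub_perm_mask (T : eqType) (L S B : seq T) :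
  perm_eq L S -> subseq B L -> exists b : bitseq, perm_eq (mask b S) B.
Proof.
move=> pLS sBL.
have : forall z, (count_mem z B <= count_mem z S)%N.
  by move=> z; rewrite -(seq.permP pLS); apply: leq_count_subseq.
case/count_maskP => b _ pb; exists b; by rewrite perm_sym.
Qed.

Lemma prod_perm_ab (gT : finGroupType) (A : {group gT}) (s1 s2 : seq gT) :
  abelian A -> all (mem A) s1 -> perm_eq s1 s2 ->
  (\prod_(g <- s1) g = \prod_(g <- s2) g)%g.
Proof.
move=> abA; elim: s1 s2 => [|a s1 IH] s2 /=.
  by move=> _; rewrite perm_sym => /perm_nilP ->.
case/andP => aA s1A p12.
have a2 : a \in s2 by rewrite -(perm_mem p12) mem_head.
case/splitPr: a2 p12 => s2a s2b p12.
have p' : perm_eq s1 (s2a ++ s2b).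
  rewrite -(perm_cons a); apply: (perm_trans p12).
  by apply/seq.permP => z; rewrite /= !count_cat /=; lia.
have s2aA : all (mem A) s2a.
  apply/allP => z zin; have: z \in a :: s1 by rewrite (perm_mem p12) mem_cat zin.
  rewrite inE => /orP [/eqP -> //|]; by move/(allP s1A).
rewrite big_cons (IH _ s1A p') !big_cat big_cons /= mulgA.
have -> : (a * \prod_(g <- s2a) g = \prod_(g <- s2a) g * a)%g; last by rewrite mulgA.
have pA : (\prod_(g <- s2a) g \in A)%g.
  by rewrite big_seq; apply: group_prod => z zin; exact: (allP s2aA).
by apply: (centsP abA).
Qed.

Lemma prodG (gT : finGroupType) (G : {group gT}) (s : seq gT) :
  all (mem G) s -> (\prod_(g <- s) g)%g \in G.
Proof.
elim: s => [|a s IH] /=; first by rewrite big_nil group1.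
by case/andP => aG sG; rewrite big_cons groupM ?IH.
Qed.

Lemma prod_coset (gT : finGroupType) (H : {group gT}) (s : seq gT) :
  all (mem 'N(H)%g) s -> coset H (\prod_(g <- s) g)%g = (\prod_(c <- map (coset H) s) c)%g.
Proof.
elim: s => [|a s IH] /=; first by rewrite !big_nil morph1.
case/andP => aG sG; rewrite !big_cons morphM //=.
  by rewrite -IH.
exact: (@prodG _ 'N(H)%G).
Qed.

Lemma conj_iter (gT : finGroupType) (u z : gT) (e : nat) :
  (u ^ z = u)%g -> (u ^ (z ^+ e) = u)%g.
Proof.
move=> h; elim: e => [|e IH]; first by rewrite expg0 conjg1.
by rewrite expgS conjgM h IH.
Qed.

End Helpers.

Theorem lemma3p2 (p m : nat) (r : int)
  (gT : finGroupType) (G : {group gT}) (x y : gT) :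
  prime p -> (0 < m)%N ->
  ((r ^+ p)%R == 1 %[mod m%:Z])%Z ->
  coprimez (p%:Z * (r - 1))%R m%:Z ->
  G :=: <<[set x; y]>>%g ->
  (x ^+ p = 1)%g -> (y ^+ m = 1)%g -> (y ^ x = zexpg y r)%g ->
  #|G| = (p * m)%N ->
  (forall q : nat, prime q -> (q %| #|G|)%N -> (p <= q)%N) ->
  forall T : seq gT, all (mem G) T ->
  min_product_one (map (coset <[y]>%g) T) ->
  forall u : gT, in_pi T u ->
  exists s : seq nat,
    [/\ size s = size T, uniq s, all (fun k => (k < p)%N) s,
        (forall k, k \in s -> in_pi T (zexpg u (r ^+ k)%R)) &
        (u != 1%g -> (size T <= p)%N /\ uniq (map (fun k => zexpg u (r ^+ k)%R) s))].
Proof.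
move=> pp m0 _ cop defG xp ym yx _ _ T TG [pone minT] w [L pLT uL].
set N := <[y]>%g.
set k1 := absz (r %% m%:Z)%Z.
have hk1 : (r == k1%:Z %[mod m%:Z])%Z.
  rewrite /k1 gez0_abs ?modz_ge0 //; last by lia.
  by rewrite modz_mod.
have um : forall u, u \in N -> (u ^+ m = 1)%g.
  by move=> u /cycleP [b ->]; rewrite -expgM mulnC expgM ym expg1n.
rewrite (zexpgE m0 ym hk1) in yx.
have F2 : forall u, u \in N -> (u ^ x = u ^+ k1)%g.
  by move=> u /cycleP [b ->]; rewrite conjXg yx -!expgM mulnC.
have F3 : forall u a, u \in N -> (u ^ (x ^+ a) = u ^+ (k1 ^ a))%g.
  move=> u a uN; elim: a => [|a IH]; first by rewrite expg0 conjg1 expn0 expg1.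
  rewrite expgSr conjgM IH F2; last exact: groupX.
  by rewrite -expgM expnSr.
have F4 : forall u a, u \in N -> zexpg u (r ^+ a)%R = (u ^+ (k1 ^ a))%g.
  move=> u a uN; apply: (zexpgE (m:=m)) => //; first exact: (um _ uN).
  have -> : ((k1 ^ a)%N : int) = (k1%:Z ^+ a)%R.
    by rewrite -natz natrX natz.
  by rewrite -modzXm (eqP hk1) modzXm.
have xN : x \in 'N(N)%g.
  apply/normP; apply/eqP; rewrite eqEcard cardJg leqnn andbT.
  rewrite -cycleJ yx cycle_subG; exact: mem_cycle.
have GxN : (G \subset <[x]> * N)%g.
  rewrite -norm_joinEl ?cycle_subG // defG.
  apply: genS; apply/subsetP => z; rewrite !inE => /orP [] /eqP ->.
    by rewrite cycle_id.
  by rewrite cycle_id orbT.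
have GN : (G \subset 'N(N))%g.
  apply: subset_trans GxN _; rewrite -norm_joinEl ?cycle_subG //.
  by rewrite join_subG cycle_subG xN normG.
have dec : forall g, g \in G -> exists2 a, (a < p)%N & exists2 n, n \in N & g = (x ^+ a * n)%g.
  move=> g /(subsetP GxN) /mulsgP [xi n /cycleP [i ->] nN ->].
  exists (i %% p)%N; first by rewrite ltn_mod prime_gt0.
  by exists n => //; rewrite expg_mod.
have NN : forall n, n \in N -> n \in 'N(N)%g.
  by move=> n nN; apply: (subsetP (normG N)).
have cN : forall v n, v \in N -> n \in N -> (v ^ n = v)%g.
  move=> v n vN nN; rewrite conjgE.
  have c : commute v n by apply: (centsP (cycle_abelian y)).
  by rewrite c mulKg.
have LG : all (mem G) L by rewrite (perm_all _ pLT).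
have subG : forall s, subseq s L -> all (mem G) s.
  by move=> s ss; apply/allP => z zs; apply: (allP LG); apply: (mem_subseq ss).
have allN : forall s, all (mem G) s -> all (mem 'N(N)%g) s.
  by move=> s /allP sG; apply/allP => z zs; apply: (subsetP GN); apply: sG.
have cx : forall g, g \in G -> coset N g \in <[coset N x]>%g.
  move=> g /dec [a _ [n nN ->]].
  rewrite coset_kerr // morphX //; exact: mem_cycle.
have wN : w \in N.
  have wNN : w \in 'N(N)%g by rewrite -uL; apply: (@prodG _ 'N(N)%G); apply: allN.
  apply: coset_idr => //.
  case: pone => t' pt' t'1.
  rewrite -uL prod_coset ?allN //; rewrite -[RHS]t'1.
  apply: (prod_perm_ab (cycle_abelian (coset N x))).
    by rewrite all_map; apply/allP => z zL; apply: cx; apply: (allP LG).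
  by apply: (perm_trans (perm_map _ pLT)); rewrite perm_sym.
pose ex g := find (fun i => (x ^- i * g)%g \in N) (iota 0 p).
have exP : forall g, g \in G -> (ex g < p)%N /\ (x ^- ex g * g)%g \in N.
  move=> g /dec [a ap [n nN gE]].
  have h : has (fun i => (x ^- i * g)%g \in N) (iota 0 p).
    by apply/hasP; exists a; [rewrite mem_iota | rewrite gE mulKg].
  have := nth_find 0 h; rewrite -/(ex g).
  have := h; rewrite has_find size_iota => lt.
  by rewrite nth_iota // add0n.
pose P j := (\prod_(g <- take j L) g)%g.
have PG : forall j, P j \in G by move=> j; apply: prodG; apply: subG; apply: take_subseq.
have sL : size L = size T by apply: perm_size.
pose s := map (fun j => ex (P j)) (iota 0 (size T)).
have key : forall i j, (i < j < size T)%N -> ex (P i) = ex (P j) -> False.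
  move=> i j /andP [ij jT] eij.
  set B := drop i (take j L).
  have PjE : P j = (P i * \prod_(g <- B) g)%g.
    by rewrite /P -big_cat /= -{1}(cat_take_drop i (take j L)) take_takel // ltnW.
  have QN : (\prod_(g <- B) g)%g \in N.
    have h1 := (exP _ (PG i)).2; have h2 := (exP _ (PG j)).2.
    have gen : forall (a q z1 z2 : gT), z1 = z2 -> (z1 * a)%g \in N -> (z2 * (a * q))%g \in N -> q \in N.
      move=> a q z1 z2 <- g1 g2.
      have -> : q = ((z1 * a)^-1 * (z1 * (a * q)))%g by rewrite invMg -!mulgA !mulKg.
      by rewrite groupM ?groupV.
    apply: (gen (P i) _ _ _ (congr1 (fun k => (x ^- k)%g) eij) h1).
    move: h2; rewrite {2}PjE; move=> h2'; exact: h2'.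
  have BL : subseq B L by apply: (subseq_trans (drop_subseq _ _)); apply: take_subseq.
  have [b pb] := sub_perm_mask pLT BL.
  have szB : size B = (j - i)%N by rewrite size_drop size_take sL jT.
  apply: (minT b).
    rewrite -map_mask !size_map (perm_size pb) szB subn_gt0 ij /=; exact: leq_ltn_trans (leq_subr i j) jT.
  exists (map (coset N) B).
    by rewrite -map_mask; apply: perm_map; rewrite perm_sym.
  by rewrite -prod_coset ?coset_id // allN // subG.
have us : uniq s.
  rewrite map_inj_in_uniq ?iota_uniq // => i j; rewrite !mem_iota !add0n => /andP [_ iT] /andP [_ jT] e.
  case: (ltngtP i j) => // h.
    by exfalso; apply: (key i j) => //; rewrite h jT.
  by exfalso; apply: (key j i) => //; rewrite h iT.
have sp : all (fun k => (k < p)%N) s.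
  by apply/allP => k /mapP [j _ ->]; exact: (exP _ (PG j)).1.
exists s; split => //.
- by rewrite size_map size_iota.
- move=> k /mapP [j _ ->].
  exists (seq.rot j L); first by rewrite perm_rot.
  have := (exP _ (PG j)).2; set e := ex (P j) => nN.
  rewrite F4 // -F3 //.
  have -> : (w ^ x ^+ e = w ^ P j)%g.
    have PjD : P j = (x ^+ e * (x ^- e * P j))%g by rewrite mulgA mulgV mul1g.
    by rewrite [in RHS]PjD conjgM (cN _ _ _ nN) // memJ_norm ?groupX.
  rewrite /seq.rot big_cat /= -uL -{3}(cat_take_drop j L) big_cat /= -/(P j).
  by rewrite conjgE -!mulgA mulKg.
- move=> w1; split.
    have -> : size T = size s by rewrite size_map size_iota.
    rewrite -(size_iota 0 p); apply: uniq_leq_size => // k ks.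
    by rewrite mem_iota add0n (allP sp k ks).
  rewrite map_inj_in_uniq // => a b ain bin.
  rewrite !F4 // -!F3 // => e.
  have ap := allP sp a ain; have bp := allP sp b bin.
  have key2 : forall a b, (a < b < p)%N -> (w ^ x ^+ a = w ^ x ^+ b)%g -> False.
    move=> a' b' /andP [ab bp'] e'.
    have c0 : (0 < b' - a' < p)%N by apply/andP; split; clear -ab bp'; lia.
    have wc : (w ^ x ^+ (b' - a') = w)%g.
      apply: (conjg_inj (x ^+ a')%g); rewrite -conjgM -expgD subnK ?e' //; exact: ltnW.
    have cop' : coprime #[x]%g (b' - a').
      apply: (coprime_dvdl (n := p)); first by rewrite order_dvdn xp.
      by rewrite prime_coprime // gtnNdvd //; case/andP: c0.
    have : x \in <[x ^+ (b' - a')]>%g.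
      by move: cop'; rewrite -generator_coprime => /eqP <-; apply: cycle_id.
    case/cycleP => f xf.
    have wx : (w ^ x = w)%g by rewrite xf; apply: conj_iter.
    move: wx; rewrite F2 // => wk.
    have : (w ^+ k1 == w ^+ 1)%g by rewrite wk expg1.
    rewrite eq_expg_mod_order => hmod.
    have om : (#[w]%g %| m)%N by rewrite order_dvdn um.
    have o1 : (#[w]%g %:Z %| 1)%Z.
      have -> : (1 = gcdz (p%:Z * (r - 1))%R m%:Z)%Z by apply/esym/eqP.
      rewrite dvdz_gcd; apply/andP; split; last by rewrite dvdzE.
      apply: dvdz_mull.
      have hd : (m%:Z %| (r - k1%:Z)%R)%Z by rewrite -eqz_mod_dvd.
      have h1 : (#[w]%g%:Z %| (r - k1%:Z)%R)%Z by apply: dvdz_trans hd; rewrite dvdzE.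
      have h2 : (#[w]%g%:Z %| (k1%:Z - 1)%R)%Z.
        case: (posnP k1) => k0.
          move: hmod; rewrite k0 mod0n eq_sym -/(dvdn _ _) => hh.
          by rewrite dvdzE; apply: dvdn_trans hh _; rewrite dvdn1.
        move: hmod; rewrite eqn_mod_dvd // dvdzE.
        have -> : `|(k1%:Z - 1)%R|%N = (k1 - 1)%N by clear -k0; lia.
        done.
      have -> : (r - 1 = (r - k1%:Z) + (k1%:Z - 1))%R by rewrite addrA subrK.
      by rewrite rpredD.
    move: o1; rewrite dvdz1 /= order_eq1 => /eqP w1'.
    by move/eqP: w1; apply.
  case: (ltngtP a b) => // h.
    by exfalso; apply: (key2 a b) => //; rewrite h bp.
  by exfalso; apply: (key2 b a) => //; rewrite h ap.
Qed.
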